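(* Let $N=\langle S,T,F,I,R,\mathsf m,\ell\rangle$ be a single execution net. Let $\mathit{Confl}(N)=\{\{t,t'\}\mid t,t'\in T,\ \forall X\in \mathrm{St}(N).\ \{t,t'\}\not\subseteq \lfloor X\rfloor\}$, let $S^{\#}=\{s_A\mid A\in \mathit{Confl}(N)\}$ be a set of fresh places (disjoint from $S\cup T$), and let $$N^{\#}=\langle S\cup S^{\#},\ T,\ F\cup\{(s_A,t)\mid s_A\in S^{\#},\ t\in A\},\ I,\ R,\ \mathsf m + S^{\#},\ \ell\rangle ,$$ i.e. every new place $s_A$ is initially marked with one token, has no incoming arcs, and is in the preset of each transition of $A$. Then $N^{\#}$ is conflict saturated and $N\equiv N^{\#}$.
   Context: A (labelled contextual) Petri net is a tuple $N=\langle S,T,F,I,R,\mathsf m,\ell\rangle$ where $S$ (places) and $T$ (transitions) are disjoint sets, $F\subseteq (S\times T)\cup(T\times S)$ is the flow relation, $I\subseteq S\times T$ are inhibitor arcs, $R\subseteq S\times T$ are read arcs, $\mathsf m$ is a multiset over $S$ (initial marking), and $\ell:T\to L$ is a total labelling function into a set $L$ of labels. For $x\in S\cup T$: ${}^\bullet x=\{y\mid (y,x)\in F\}$, $x^\bullet=\{y\mid (x,y)\in F\}$; for $t\in T$: ${}^\circ t=\{s\mid (s,t)\in I\}$ and $\underline{t}=\{s\mid (s,t)\in R\}$. Every transition has nonempty preset. A transition $t$ is enabled at a marking $m$ if ${}^\bullet t+\underline t\subseteq m$ and $m(s)=0$ for every $s\in {}^\circ t$; its firing yields $m'=m-{}^\bullet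 t+t^\bullet$. A (finite) firing sequence is $\mathsf m=m_0[t_1\rangle m_1[t_2\rangle\cdots[t_n\rangle m_n$ where each $t_{i+1}$ is enabled at $m_i$ and its firing yields $m_{i+1}$. A state of $N$ is the multiset $t_1+\dots+t_n$ of the transitions fired in such a finite firing sequence starting at the initial marking; $\mathrm{St}(N)$ is the set of states. For a multiset $X$, $\lfloor X\rfloor$ is its support (the set of elements with nonzero multiplicity). $N$ is a single execution net if every state is a set ($X=\lfloor X\rfloor$). $N$ is conflict saturated if for all $t,t'\in T$ such that $\{t,t'\}\not\subseteq\lfloor X\rfloor$ for every $X\in\mathrm{St}(N)$, one has ${}^\bullet t\cap{}^\bullet t'\neq\emptyset$. Two nets $N,N'$ are equivalent, $N\equiv N'$, if they have the same set of transitions, the same labelling and $\mathrm{St}(N)=\mathrm{St}(N')$. *)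

(* Defs.v *)
From mathcomp Require Import all_boot.
From mathcomp Require Import finmap.
Set Implicit Arguments. Unset Strict Implicit. Unset Printing Implicit Defensive.
Local Open Scope fset_scope.

(* The flow relation F is split into its S x T part (pre) and
   its T x S part (post); inh = inhibitor arcs I, rd = read arcs R,
   m0 = initial marking (a multiset over S), lab = labelling. *)
Record net (L S : Type) (T : choiceType) := Net {
  pre  : S -> T -> bool;
  post : T -> S -> bool;
  inh  : S -> T -> bool;
  rd   : S -> T -> bool;
  m0   : S -> nat;
  lab  : T -> L
}.

Section Semantics.
Variables (L S : Type) (T : choiceType) (N : net L S T).

Definition nonempty_presets : Prop := forall t : T, exists s : S, pre N s t.

Definition enabled (m : S -> nat) (t : T) : Prop :=
  (forall s, pre N s t + rd N s t <= m s)%N /\ (forall s, inh N s t -> m s = 0).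

Definition fire (m : S -> nat) (t : T) : S -> nat :=
  fun s => (m s - pre N s t + post N t s)%N.

Fixpoint fires (m : S -> nat) (l : seq T) : Prop :=
  match l with
  | [::] => True
  | t :: l' => enabled m t /\ fires (fire m t) l'
  end.

Definition isState (X : T -> nat) : Prop :=
  exists l : seq T, fires (m0 N) l /\ forall t, X t = count_mem t l.

Definition single_execution : Prop :=
  forall X, isState X -> forall t, (X t <= 1)%N.

Definition in_conflict (t t' : T) : Prop :=
  forall X, isState X -> ~ ((0 < X t)%N /\ (0 < X t')%N).

Definition conflict_saturated : Prop :=
  forall t t' : T, in_conflict t t' -> exists s : S, pre N s t && pre N s t'.

Definition confl_place : Type :=
  {A : {fset T} | exists t t' : T, A = [fset t; t'] /\ in_conflict t t'}.

Definition sharp : net L (S + confl_place) T :=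
  @Net L (S + confl_place) T
    (fun p t => match p with inl s => pre N s t | inr A => t \in sval A end)
    (fun t p => match p with inl s => post N t s | inr _ => false end)
    (fun p t => match p with inl s => inh N s t | inr _ => false end)
    (fun p t => match p with inl s => rd N s t | inr _ => false end)
    (fun p => match p with inl s => m0 N s | inr _ => 1 end)
    (lab N).

End Semantics.

Definition net_equiv (L S S' : Type) (T : choiceType)
    (N : net L S T) (N' : net L S' T) : Prop :=
  (forall t, lab N t = lab N' t) /\ (forall X, isState N X <-> isState N' X).

(* Main.v *)
Require Import Defs.
From mathcomp Require Import all_boot.
From mathcomp Require Import finmap.
Local Open Scope fset_scope.

Section Proofs.
Variables (L S : Type) (T : choiceType) (N : net L S T).

Lemma back (l : seq T) : forall (M : S + confl_place N -> nat) (m : S -> nat),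
  (forall s, M (inl s) = m s) -> fires (sharp N) M l -> fires N m l.
Proof.
elim: l => [//|t l IH] M m HM /= [[Hen Hinh] Hf]; split.
  split=> s; [have := Hen (inl s) | move=> hs; have := Hinh (inl s) hs];
  by rewrite /= HM.
by apply: (IH _ _ _ Hf) => s; rewrite /fire /= HM.
Qed.

Lemma fwd (HS : single_execution N) (l : seq T) :
  forall (p : seq T) (M : S + confl_place N -> nat) (m : S -> nat),
  (forall s, M (inl s) = m s) ->
  (forall A, M (inr A) = if has (mem (sval A)) p then 0%N else 1%N) ->
  (forall q, fires N m q -> fires N (m0 N) (p ++ q)) ->
  fires N m l -> fires (sharp N) M l.
Proof.
elim: l => [//|t l IH] p M m HM HA Hp /= [[Hen Hinh] Hf]; split.
  split.
    case=> [s|A] /=; first by rewrite HM.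
    rewrite HA addnC /=.
    case Ht: (t \in sval A) => //.
    case Hh: (has _ _) => //; exfalso.
    have Hst : isState N (fun x => count_mem x (p ++ [:: t])).
      exists (p ++ [:: t]); split => //; apply: Hp => /=; do 2 split => //.
    move/hasP: Hh => [u Hu HuA].
    have [a [b [EA Hc]]] := svalP A.
    rewrite EA in Ht HuA.
    have cnt : forall x, x \in p ++ [:: t] -> (0 < count_mem x (p ++ [:: t]))%N.
      by move=> x hx; rewrite -has_count has_pred1.
    have Hu2 : u \in p ++ [:: t] by rewrite mem_cat Hu.
    have Ht2 : t \in p ++ [:: t] by rewrite mem_cat mem_seq1 eqxx orbT.
    have twice : forall x, x = t -> x = u -> False.
      move=> x Ext Exu; rewrite -Exu Ext in Hu; have := HS _ Hst t.
      rewrite count_cat /= eqxx addn1 ltnS leqNgt.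
      by rewrite -has_count has_pred1 Hu.
    move/fset2P: Ht => [] Ht; move/fset2P: HuA => [] Hu'.
    - by apply: (twice t) => //; rewrite Hu' Ht.
    - by apply: (Hc _ Hst); split; apply: cnt; [rewrite -Ht | rewrite -Hu'].
    - by apply: (Hc _ Hst); split; apply: cnt; [rewrite -Hu' | rewrite -Ht].
    - by apply: (twice t) => //; rewrite Hu' Ht.
  by case=> [s|A] //= hs; rewrite HM; apply: Hinh.
apply: (IH (rcons p t) _ (fire N m t)) => //.
- by move=> s; rewrite /fire /= HM.
- move=> A; rewrite /fire /= HA has_rcons /= addn0.
  by case: (t \in sval A); case: (has _ p).
- by move=> q hq; rewrite -cats1 -catA; apply: Hp.
Qed.

Lemma states_eq (HS : single_execution N) X :
  isState N X <-> isState (sharp N) X.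
Proof.
split=> [[l [hl hX]]|[l [hl hX]]]; exists l; split => //.
  apply: (fwd HS l [::] _ (m0 N)) => //.
by apply: (back l (m0 (sharp N)) (m0 N)) hl.
Qed.

End Proofs.

Theorem mainTheorem1 (L S : Type) (T : choiceType) (N : net L S T) :
  nonempty_presets N -> single_execution N ->
  conflict_saturated (sharp N) /\ net_equiv N (sharp N).
Proof.
move=> _ HS; split; last by split => // X; exact: (@states_eq L S T N HS X).
move=> t t' Hc.
have Hc' : in_conflict N t t'.
  by move=> X hX; apply: Hc; exact/(proj1 (@states_eq L S T N HS X)).
exists (inr (exist _ [fset t; t'] (ex_intro _ t (ex_intro _ t' (conj erefl Hc'))))).
by rewrite /= fset21 fset22.
Qed.
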